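(* Every Boolean self-join-free conjunctive query that has exactly two minimal query plans is linear, i.e., contains no triad.
   Context: Let $Q=\exists\vec x\,(R_1(\vec x_1)\wedge\cdots\wedge R_m(\vec x_m))$ be a Boolean self-join-free conjunctive query. $Q$ is hierarchical if for any two variables $x,y$, with $\mathrm{at}(x)$ the set of atoms containing $x$, $\mathrm{at}(x)\subseteq\mathrm{at}(y)$, $\mathrm{at}(x)\supseteq\mathrm{at}(y)$ or $\mathrm{at}(x)\cap\mathrm{at}(y)=\emptyset$. A dissociation is $\Delta=(\vec y_1,\dots,\vec y_m)$ with $\vec y_i\subseteq\mathrm{var}(Q)\setminus\vec x_i$; $Q^\Delta$ has atoms $R_i^{\vec y_i}(\vec x_i,\vec y_i)$; $\Delta$ is hierarchical if $Q^\Delta$ is. Order dissociations by $\Delta\preceq\Delta'$ iff $\vec y_i\subseteq\vec y'_i$ for all $i$. The minimal query plans of $Q$ correspond one-to-one to the minimal hierarchical dissociations. An atom is independent if no other atom has a variable set that is a strict subset of its variable set. A path between atoms $R_1,R_p$ is an alternating sequence $R_1-\vec y_1-R_2-\cdots-\vec y_{p-1}-R_p$ with consecutive atoms sharing the nonempty variable sets $\vec y_i$. A triad is a set of three independent atoms $\{R_1,R_2,R_3\}$ such that for each pair $i\ne j$ there is a path from $R_i$ to $R_j$ using no variable of the third atom. $Q$ is linear if it has no triad. *)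

(* Defs.v *)
From mathcomp Require Import all_boot.
Set Implicit Arguments. Unset Strict Implicit. Unset Printing Implicit Defensive.

(* A Boolean self-join-free conjunctive query with m atoms R_0..R_{m-1} over a
   finite type of variables V is given by the variable sets  x i = vars(R_i).
   (Self-join-freeness: every atom has its own relation symbol, so the query is
   determined by the family of variable sets of its atoms.) *)

Section CQ.
Variables (V : finType) (m : nat).
Implicit Types (x : 'I_m -> {set V}).

Definition qvars x : {set V} := \bigcup_(i < m) x i.

Definition atoms_of x (v : V) : {set 'I_m} := [set i | v \in x i].

Definition hierarchical x : bool :=
  [forall v, forall w,
     [|| atoms_of x v \subset atoms_of x w,
         atoms_of x w \subset atoms_of x v |
         [disjoint atoms_of x v & atoms_of x w]]].

Definition dissociation x (D : {ffun 'I_m -> {set V}}) : bool :=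
  [forall i, D i \subset qvars x :\: x i].

Definition dissociate x (D : {ffun 'I_m -> {set V}}) : 'I_m -> {set V} :=
  fun i => x i :|: D i.

Definition hier_dissociation x (D : {ffun 'I_m -> {set V}}) : bool :=
  dissociation x D && hierarchical (dissociate x D).

Definition dissoc_le (D D' : {ffun 'I_m -> {set V}}) : bool :=
  [forall i, D i \subset D' i].

Definition min_hier_dissociation x (D : {ffun 'I_m -> {set V}}) : bool :=
  hier_dissociation x D &&
  [forall D' : {ffun 'I_m -> {set V}},
     (hier_dissociation x D' && dissoc_le D' D) ==> (D' == D)].

(* number of minimal query plans = number of minimal hierarchical dissociations *)
Definition num_min_plans x : nat :=
  #|[set D : {ffun 'I_m -> {set V}} | min_hier_dissociation x D]|.

Definition independent x (i : 'I_m) : bool :=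
  [forall j, ~~ (x j \proper x i)].

Definition step_avoiding x (k : 'I_m) : rel 'I_m :=
  fun a b => [exists v, [&& v \in x a, v \in x b & v \notin x k]].

Definition path_avoiding x (k i j : 'I_m) : bool :=
  connect (step_avoiding x k) i j.

Definition triad x (i j k : 'I_m) : bool :=
  [&& i != j, j != k, i != k,
      independent x i, independent x j, independent x k,
      path_avoiding x k i j, path_avoiding x i j k & path_avoiding x j i k].

Definition linear x : bool :=
  ~~ [exists i, exists j, exists k, triad x i j k].

End CQ.

(* Main.v *)
Require Import Defs.
From mathcomp Require Import all_boot.

Set Implicit Arguments. Unset Strict Implicit. Unset Printing Implicit Defensive.

Section Proof.
Variables (V : finType) (m : nat).
Implicit Types (x z : 'I_m -> {set V}).

Lemma step_sym x k : symmetric (step_avoiding x k).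
Proof.
move=> a b; apply/existsP/existsP => -[v /and3P[h1 h2 h3]]; exists v;
  by rewrite h1 h2 h3.
Qed.

Lemma pa_sym x k a b : path_avoiding x k a b -> path_avoiding x k b a.
Proof. by rewrite /path_avoiding (sym_connect_sym (@step_sym x k)). Qed.

Lemma hierP z v w : hierarchical z ->
  [|| atoms_of z v \subset atoms_of z w,
      atoms_of z w \subset atoms_of z v |
      [disjoint atoms_of z v & atoms_of z w]].
Proof. by move=> /forallP /(_ v) /forallP /(_ w). Qed.

Lemma exit_step x z k a b w :
  hierarchical z -> (forall i, x i \subset z i) ->
  connect (step_avoiding x k) a b -> w \in z a -> w \notin z b ->
  exists v c, [/\ v \notin x k, atoms_of z w \subset atoms_of z v,
                  v \in z c & w \notin z c].
Proof.
move=> Hh Hxz /connectP[p Hp ->]; elim: p a Hp => [|a1 p IH] a /=.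
  by move=> _ ->.
case/andP=> /existsP[u /and3P[ua ua1 uk]] Hp wa wl.
case wa1: (w \in z a1); first exact: (IH a1 Hp wa1 wl).
have ua' : u \in z a by apply: (subsetP (Hxz a)).
have ua1' : u \in z a1 by apply: (subsetP (Hxz a1)).
exists u, a1; split => //; last by rewrite wa1.
case/or3P: (hierP w u Hh) => // [H|H].
  have : a1 \in atoms_of z u by rewrite inE.
  by move/(subsetP H); rewrite inE wa1.
have : a \in atoms_of z w by rewrite inE.
by move/(disjointFr H); rewrite inE ua'.
Qed.

Lemma keyK x z a b c :
  hierarchical z -> (forall i, x i \subset z i) ->
  z a = x a -> z b = x b -> b != c ->
  connect (step_avoiding x a) b c -> connect (step_avoiding x b) c a -> False.
Proof.
move=> Hh Hxz za zb bc P1 P2.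
have inc : forall w, w \in z b -> w \in z c -> w \in z a.
  move=> w wb wc; apply/negPn/negP => wa.
  have [v [c' [vnb sub _ _]]] := exit_step Hh Hxz P2 wc wa.
  have : b \in atoms_of z v by apply: (subsetP sub); rewrite inE.
  by rewrite inE zb (negbTE vnb).
case: (boolP (z b \subset z c)) => Hbc.
  move: P1 => /connectP[[|a1 p] Hp Hl]; first by rewrite /= in Hl; rewrite Hl eqxx in bc.
  move: Hp => /= /andP[/existsP[u /and3P[ub ua1 ua]] _].
  have ub' : u \in z b by rewrite zb.
  have := inc u ub' (subsetP Hbc u ub').
  by rewrite za (negbTE ua).
have [w0 /andP[w0b w0c]] : exists w0, (w0 \in z b) && (w0 \notin z c).
  move/subsetPn: Hbc => [w0 h1 h2]; exists w0; by rewrite h1 h2.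
case: (@arg_maxnP V w0 (fun w => (w \in z b) && (w \notin z c))
          (fun w => #|atoms_of z w|)); first by rewrite w0b w0c.
move=> w /andP[wb wc] Hmax.
have [v [c' [vna sub vc' wc']]] := exit_step Hh Hxz P1 wb wc.
have vb : v \in z b.
  have : b \in atoms_of z v by apply: (subsetP sub); rewrite inE.
  by rewrite inE.
case vc: (v \in z c).
  by have := inc v vb vc; rewrite za (negbTE vna).
have := Hmax v; rewrite vb vc => /(_ isT).
have Hpr : atoms_of z w \proper atoms_of z v.
  apply/properP; split => //; exists c'; by rewrite inE.
move=> h; have := proper_card Hpr; by rewrite ltnNge [_ <= _]h.
Qed.

Lemma keyD x (D : {ffun 'I_m -> {set V}}) a b c :
  hier_dissociation x D -> D a = set0 -> D b = set0 -> b != c ->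
  path_avoiding x a b c -> path_avoiding x b c a -> False.
Proof.
move=> /andP[_ Hh] Da Db bc P1 P2.
apply: (keyK Hh _ _ _ bc P1 P2).
- by move=> i; rewrite /dissociate subsetUl.
- by rewrite /dissociate Da setU0.
- by rewrite /dissociate Db setU0.
Qed.

Definition graph (D : {ffun 'I_m -> {set V}}) : {set 'I_m * V} :=
  [set p | p.2 \in D p.1].

Lemma exists_min x D : hier_dissociation x D ->
  exists M, min_hier_dissociation x M && dissoc_le M D.
Proof.
have [n] := ubnP #|graph D|; elim: n D => // n IH D lt HD.
case: (boolP (min_hier_dissociation x D)) => Hm.
  exists D; rewrite Hm /=; apply/forallP => i; exact: subxx.
move: Hm; rewrite /min_hier_dissociation HD /= => /forallPn[D']; rewrite negb_imply => /andP[/andP[HD' le] ne].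
have [|M /andP[HM le']] := IH D' _ HD'.
  have Hpr : graph D' \proper graph D.
    apply/properP; split.
      apply/subsetP => -[i v]; rewrite !inE /= => h.
      by move/forallP: le => /(_ i) /subsetP; apply.
    have [i Hi] : exists i, D' i != D i.
      apply/existsP; apply: contraR ne => /existsPn h.
      by apply/eqP/ffunP => i; apply/eqP; move: (h i); rewrite negbK.
    have sub : D' i \subset D i by move/forallP: le => /(_ i).
    have : ~~ (D i \subset D' i) by apply: contra Hi => h; rewrite eqEsubset sub h.
    case/subsetPn => v h1 h2; exists (i, v); by rewrite !inE.
  by apply: (leq_trans (proper_card Hpr)); rewrite -ltnS.
exists M; move: HM; rewrite /min_hier_dissociation => -> /=; apply/forallP => i.
apply: (subset_trans (forallP le' i)); exact: (forallP le i).
Qed.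

Definition Dt x (t : 'I_m) : {ffun 'I_m -> {set V}} :=
  [ffun s => if s == t then set0 else qvars x :\: x s].

Lemma sub_qvars x s : x s \subset qvars x.
Proof. exact: (bigcup_sup s). Qed.

Lemma zD x t s v :
  (v \in dissociate x (Dt x t) s) = if s == t then v \in x t else v \in qvars x.
Proof.
rewrite /dissociate ffunE; case: eqP => [->|_]; first by rewrite setU0.
rewrite in_setU in_setD; case h: (v \in x s) => //=.
by rewrite (subsetP (sub_qvars x s) v h).
Qed.

Lemma atE z s v : (s \in atoms_of z v) = (v \in z s).
Proof. by rewrite inE. Qed.

Lemma Dt_hier x t : hier_dissociation x (Dt x t).
Proof.
apply/andP; split.
  apply/forallP => s; rewrite ffunE; case: eqP => _; [exact: sub0set | exact: subxx].
apply/forallP => v; apply/forallP => w.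
case Hv: (v \in qvars x); last first.
  apply/orP; left; apply/subsetP => s; rewrite atE zD; case: eqP => [->|_].
    by move/(subsetP (sub_qvars x t)); rewrite Hv.
  by rewrite Hv.
case Hw: (w \in qvars x); last first.
  apply/orP; right; apply/orP; left; apply/subsetP => s; rewrite atE zD; case: eqP => [->|_].
    by move/(subsetP (sub_qvars x t)); rewrite Hw.
  by rewrite Hw.
case Hvt: (v \in x t); case Hwt: (w \in x t).
- apply/orP; left; apply/subsetP => s; rewrite !atE !zD Hvt Hwt Hv Hw; by case: eqP.
- apply/orP; right; apply/orP; left; apply/subsetP => s; rewrite !atE !zD Hvt Hwt Hv Hw; by case: eqP.
- apply/orP; left; apply/subsetP => s; rewrite !atE !zD Hvt Hwt Hv Hw; by case: eqP.
- apply/orP; left; apply/subsetP => s; rewrite !atE !zD Hvt Hwt Hv Hw; by case: eqP.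
Qed.

Lemma min_at x t : exists M, min_hier_dissociation x M && (M t == set0).
Proof.
have [M /andP[HM le]] := exists_min (Dt_hier x t).
exists M; rewrite HM /= -subset0.
by move/forallP: le => /(_ t); rewrite ffunE eqxx.
Qed.

End Proof.

Theorem mainTheorem10 (V : finType) (m : nat) (x : 'I_m -> {set V}) :
  num_min_plans x = 2 -> linear x.
Proof.
move=> H2; apply/negP => /existsP[i /existsP[j /existsP[k]]].
case/and4P=> ij jk ik /and4P[_ _ _ /and3P[Pkij Pijk Pjik]].
have [Mi /andP[Hi Mi0]] := min_at x i.
have [Mj /andP[Hj Mj0]] := min_at x j.
have [Mk /andP[Hk Mk0]] := min_at x k.
have hd : forall M, min_hier_dissociation x M -> hier_dissociation x M.
  by move=> M /andP[].
have nij : Mi != Mj.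
  apply/eqP => E; subst Mj.
  exact: (keyD (hd _ Hi) (eqP Mi0) (eqP Mj0) jk Pijk (pa_sym Pjik)).
have nik : Mi != Mk.
  apply/eqP => E; subst Mk.
  by apply: (keyD (hd _ Hi) (eqP Mi0) (eqP Mk0) _ (pa_sym Pijk) (pa_sym Pkij));
    rewrite eq_sym.
have njk : Mj != Mk.
  apply/eqP => E; subst Mk.
  by apply: (keyD (hd _ Hj) (eqP Mj0) (eqP Mk0) _ (pa_sym Pjik) Pkij);
    rewrite eq_sym.
have : #|[set Mi; Mj; Mk]| <= #|[set D | min_hier_dissociation x D]|.
  apply: subset_leq_card; apply/subsetP => M; rewrite !inE.
  by case/orP => [/orP[]|] /eqP ->.
have E : #|[set D | min_hier_dissociation x D]| = 2 := H2.
rewrite E -setUA cardsU1 cards2 !inE negb_or nij nik njk.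
by [].
Qed.
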